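(* For every $n \ge 2$, the $n$-crown poset $X_n$ is 2-chain-retractable to the 2-chain, i.e. $X_n \oslash C_2 \cong C_2$ and $X_n \not\cong C_2$, where $C_2$ is the 2-chain.
   Context: The 2-chain $C_2$ is the poset $\{x<y\}$. The $n$-crown poset $X_n$ ($n\ge2$) has elements $a_1,\dots,a_n,b_1,\dots,b_n$ with order relations exactly $a_i<b_j$ for all $i\ne j$ (besides reflexivity). Notation: $\ell(X)$ is the cardinality of a longest chain of a poset $X$. A subset $A$ of a poset $X$ is maximally ordered in $X$ if $|\{(a,b)\in A\times A:a<b\}|$ is maximal among subsets of $X$ of cardinality $|A|$. For $\sigma\in\mathrm{Aut}(P)$, $\Sigma(\sigma)=\{a:\sigma(a)\ne a\}$. For a finite poset $Q$ and $r\ge2$: $\sigma\in\mathrm{Aut}(P)$ is a $(Q,r)$-generator if there exist subsets $S_0,\dots,S_{r-1}\subset\Sigma(\sigma)$, each isomorphic to $Q$, which are smallest maximally ordered subsets of $\Sigma(\sigma)$ with $\sigma(S_i)=S_{(i+1)\bmod r}$, $\ell(S_i)=\ell(\Sigma(\sigma))$, $\bigcup_iS_i=\Sigma(\sigma)$; distinct $S_i,S_j$ are $(Q,r)$-symmetric subsets. Elements $a,b$ are $(Q,r,0)$-symmetric if $a=b$; $(Q,r,1)$-symmetric if there are $(Q,r)$-symmetric subsets $A,B$ with generator $\sigma$, $a\in A$, $b=\sigma^q(a)\in B$, $1\le q<r$; for $n\ge2$, $(Q,r,n)$-symmetric if not $(Q,r,j)$-symmetric for $j<n$ but there exist $c$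 and $j<n$ with $a$ $(Q,r,j)$-symmetric to $c$ and $c$ $(Q,r,n-j)$-symmetric to $b$; $(Q,r)$-symmetric if $(Q,r,n)$-symmetric for some $n\ge0$ (an equivalence relation). $P\oslash_rQ$ is the quotient poset of the equivalence classes with $E\le F$ iff some $e\in E$, $f\in F$ satisfy $e\le f$; $P\oslash Q$ means $P\oslash_2Q$. $P$ is $(Q,r)$-retractable to $\tilde P$ if $P\oslash_rQ\cong\tilde P$ and $P\oslash_rQ\not\cong P$. *)

(* Defs.v *)
(* Finite posets are given as a finType carrier with a
   boolean order relation; subsets carry the induced order. *)
From mathcomp Require Import all_boot all_fingroup.
Set Implicit Arguments. Unset Strict Implicit. Unset Printing Implicit Defensive.

Section Defs.
Variables (T : finType) (le : rel T).

Definition lt_of (a b : T) : bool := (a != b) && le a b.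

Definition n_ordered (A : {set T}) : nat :=
  #|[set p : T * T | [&& p.1 \in A, p.2 \in A & lt_of p.1 p.2]]|.

Definition max_ordered (X A : {set T}) : bool :=
  (A \subset X) &&
  [forall B : {set T}, ((B \subset X) && (#|B| == #|A|)) ==> (n_ordered B <= n_ordered A)].

Definition is_chain (C : {set T}) : bool :=
  [forall x in C, forall y in C, le x y || le y x].

Definition height (X : {set T}) : nat :=
  \max_(C : {set T} | (C \subset X) && is_chain C) #|C|.

Definition is_aut (s : {perm T}) : bool :=
  [forall x, forall y, le (s x) (s y) == le x y].

Definition moved (s : {perm T}) : {set T} := [set a | s a != a].

Definition smallest_max_ordered (X A : {set T}) : bool :=
  [&& max_ordered X A, height A == height X &
   [forall B : {set T}, (max_ordered X B && (height B == height X)) ==> (#|A| <= #|B|)]].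
End Defs.

Definition iso_on (T U : finType) (leT : rel T) (A : {set T}) (leU : rel U) (B : {set U}) : bool :=
  [exists f : {ffun T -> U},
    [&& [forall x in A, forall y in A, (f x == f y) ==> (x == y)],
        f @: A == B &
        [forall x in A, forall y in A, leU (f x) (f y) == leT x y]]].

Section Symmetry.
Variables (T : finType) (le : rel T) (U : finType) (leQ : rel U) (r : nat).

Definition generator_fam (s : {perm T}) (F : {ffun 'I_r -> {set T}}) : bool :=
  [&& is_aut le s,
      [forall i, F i \subset moved s],
      [forall i, iso_on le (F i) leQ [set: U]],
      [forall i, smallest_max_ordered le (moved s) (F i)],
      [forall i : 'I_r, forall j : 'I_r, (nat_of_ord j == ((nat_of_ord i).+1 %% r)) ==> (s @: F i == F j)],
      [forall i, height le (F i) == height le (moved s)] &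
      \bigcup_i F i == moved s].

Definition sym1 (a b : T) : bool :=
  [exists s : {perm T}, exists F : {ffun 'I_r -> {set T}},
    generator_fam s F &&
    [exists i, exists j,
      [&& F i != F j, a \in F i, b \in F j &
          [exists q : 'I_r, (0 < nat_of_ord q) && (b == (s ^+ q)%g a)]]]].

(* (Q,r)-symmetry: union over n of (Q,r,n)-symmetry, i.e. the
   reflexive-transitive closure of (Q,r,1)-symmetry *)
Definition qr_sym (a b : T) : bool := connect sym1 a b.

Definition qr_classes : {set {set T}} := [set [set b | qr_sym a b] | a : T].
End Symmetry.

Definition quot_le (T : finType) (le : rel T) : rel {set T} :=
  fun E F => [exists e in E, exists f in F, le e f].

Definition retractable (T : finType) (le : rel T) (U : finType) (leQ : rel U) (r : nat)
    (V : finType) (leV : rel V) : Prop :=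
  iso_on (quot_le le) (qr_classes le leQ r) leV [set: V] /\
  ~~ iso_on (quot_le le) (qr_classes le leQ r) le [set: T].

Definition chain2_le : rel bool := fun x y => x ==> y.

(* the n-crown: (false, i) = a_i, (true, j) = b_j, a_i < b_j iff i <> j *)
Definition crown_le (n : nat) : rel (bool * 'I_n) :=
  fun x y => (x == y) || [&& ~~ x.1, y.1 & x.2 != y.2].
Arguments crown_le n : clear implicits.

(* Main.v *)
Require Import Defs.
From mathcomp Require Import all_boot all_fingroup.
Set Implicit Arguments. Unset Strict Implicit. Unset Printing Implicit Defensive.

Lemma aut_fst n (hn : 2 <= n) (s : {perm bool * 'I_n}) :
  is_aut (crown_le n) s -> forall x, (s x).1 = x.1.
Proof.
move=> /forallP H [b i].
have [j ji] : exists j : 'I_n, j != i.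
  case: (eqVneq i (Ordinal (ltnW hn))) => e.
    by exists (Ordinal hn); rewrite e; apply/eqP => /(congr1 val).
  by exists (Ordinal (ltnW hn)); rewrite eq_sym.
have sinj : forall x y, (s x == s y) = (x == y) by move=> x y; rewrite (inj_eq (@perm_inj _ s)).
case: b.
- move: (H (false, j)) => /forallP /(_ (true, i)) /eqP.
  by rewrite /crown_le /= sinj ji /= => /and3P[].
- move: (H (false, i)) => /forallP /(_ (true, j)) /eqP.
  by rewrite /crown_le /= sinj /= (eq_sym i j) ji => /and3P[/negbTE].
Qed.

Lemma autX_fst n (hn : 2 <= n) (s : {perm bool * 'I_n}) q :
  is_aut (crown_le n) s -> forall x, ((s ^+ q)%g x).1 = x.1.
Proof.
move=> H x; elim: q => [|q IH]; first by rewrite expg0 perm1.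
by rewrite expgSr permM (aut_fst hn H).
Qed.

Lemma sym1_fst n (hn : 2 <= n) a b :
  sym1 (crown_le n) chain2_le 2 a b -> a.1 = b.1.
Proof.
case/existsP=> s /existsP[F /andP[/and5P[H _ _ _ _] /existsP[i /existsP[j /and4P[_ _ _ /existsP[q /andP[_ /eqP ->]]]]]]].
by rewrite (@autX_fst n hn s q H).
Qed.

Lemma qr_fst n (hn : 2 <= n) a b :
  qr_sym (crown_le n) chain2_le 2 a b -> a.1 = b.1.
Proof.
case/connectP=> p; elim: p a => [|c p IH] a /=; first by move=> _ ->.
by case/andP=> /(sym1_fst hn) -> /IH.
Qed.

Definition pr n (a b : 'I_n) : {set bool * 'I_n} := [set (false, a); (true, b)].

Lemma pr_iso n (a b : 'I_n) : a != b -> iso_on (crown_le n) (pr a b) chain2_le [set: bool].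
Proof.
move=> ab; rewrite /pr; apply/existsP; exists [ffun x : bool * 'I_n => x.1]; apply/and3P; split.
- apply/forall_inP => x; rewrite !inE => /orP[]/eqP->; apply/forall_inP => y;
  by rewrite !inE => /orP[]/eqP->; rewrite !ffunE /= ?eqxx.
- apply/eqP/setP => c; rewrite inE; apply/imsetP; case: c.
  + by exists (true, b); rewrite ?ffunE // !inE eqxx orbT.
  + by exists (false, a); rewrite ?ffunE // !inE eqxx.
- apply/forall_inP => x; rewrite !inE => /orP[]/eqP->; apply/forall_inP => y;
  by rewrite !inE => /orP[]/eqP->; rewrite !ffunE /crown_le /chain2_le /= ?eqxx ?ab.
Qed.

Lemma chain_card n (C : {set bool * 'I_n}) : is_chain (crown_le n) C -> #|C| <= 2.
Proof.
move=> /forall_inP H.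
have inj : {in C &, injective (fun x : bool * 'I_n => x.1)}.
  move=> x y xC yC e; move: (H x xC) => /forall_inP /(_ y yC).
  by rewrite /crown_le e; case: (y.1); rewrite /= ?andbF ?orbF [y == x]eq_sym orbb => /eqP.
rewrite -(card_in_imset inj); apply: (leq_trans (max_card _)); by rewrite card_bool.
Qed.

Lemma height_le2 n (X : {set bool * 'I_n}) : height (crown_le n) X <= 2.
Proof. by apply/bigmax_leqP => C /andP[_ /chain_card]. Qed.

Lemma height_le_card n (X : {set bool * 'I_n}) : height (crown_le n) X <= #|X|.
Proof. by apply/bigmax_leqP => C /andP[/subset_leq_card]. Qed.

Lemma height_pr n (a b : 'I_n) (X : {set bool * 'I_n}) : a != b -> pr a b \subset X ->
  height (crown_le n) X = 2.
Proof.
move=> ab sub; apply/eqP; rewrite eqn_leq height_le2 /=.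
have -> : 2 = #|pr a b| by rewrite /pr cards2.
apply: (leq_bigmax_cond (F := fun C : {set bool * 'I_n} => #|C|)); rewrite sub /=.
apply/forall_inP => x; rewrite !inE => /orP[]/eqP->; apply/forall_inP => y;
  by rewrite !inE => /orP[]/eqP->; rewrite /crown_le /= ?eqxx ?ab ?orbT.
Qed.

Lemma nord2 n (B : {set bool * 'I_n}) : #|B| = 2 -> n_ordered (crown_le n) B <= 1.
Proof.
move/eqP/cards2P => [x [y [xy ->]]].
have anti : forall u v : bool * 'I_n, lt_of (crown_le n) u v -> lt_of (crown_le n) v u -> False.
  move=> [[] k] [[] l]; rewrite /lt_of /crown_le /= ?andbF ?orbF //.
  by move=> /andP[/negbTE ->].
  by move=> /andP[/negbTE ->].
rewrite /n_ordered.
case Hxy: (lt_of (crown_le n) x y).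
- rewrite -(cards1 (x, y)); apply: subset_leq_card; apply/subsetP => -[u v]; rewrite !inE /=.
  case/and3P => /orP[]/eqP-> /orP[]/eqP-> //; rewrite ?eqxx //.
  + by rewrite /lt_of eqxx.
  + by move=> /anti /(_ Hxy).
  + by rewrite /lt_of eqxx.
- rewrite -(cards1 (y, x)); apply: subset_leq_card; apply/subsetP => -[u v]; rewrite !inE /=.
  case/and3P => /orP[]/eqP-> /orP[]/eqP-> //; rewrite ?eqxx ?Hxy //.
  + by rewrite /lt_of eqxx.
  + by rewrite /lt_of eqxx.
Qed.

Lemma smo_pr n (a b : 'I_n) (X : {set bool * 'I_n}) : a != b -> pr a b \subset X ->
  smallest_max_ordered (crown_le n) X (pr a b).
Proof.
move=> ab sub; have c2 : #|pr a b| = 2 by rewrite /pr cards2.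
apply/and3P; split.
- rewrite /max_ordered sub /=; apply/forallP => B; apply/implyP => /andP[_ /eqP].
  rewrite c2 => /nord2 /leq_trans; apply; apply/card_gt0P; exists ((false, a), (true, b)).
  by rewrite !inE /= !eqxx /lt_of /crown_le /= ab.
- by rewrite (height_pr ab sub) (height_pr ab (subxx _)).
- apply/forallP => B; apply/implyP => /andP[_]; rewrite (height_pr ab sub) c2 => /eqP <-.
  exact: height_le_card.
Qed.

Definition swf n (i j : 'I_n) (x : bool * 'I_n) : bool * 'I_n := (x.1, tperm i j x.2).
Lemma swf_inj n (i j : 'I_n) : injective (swf i j).
Proof. by move=> [b k] [c l] [-> /perm_inj ->]. Qed.
Definition sw n (i j : 'I_n) : {perm bool * 'I_n} := perm (@swf_inj n i j).

Lemma sw_aut n (i j : 'I_n) : is_aut (crown_le n) (sw i j).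
Proof.
apply/forallP => x; apply/forallP => y; rewrite !permE /crown_le /swf /=.
rewrite (inj_eq (@swf_inj n i j)) (inj_eq (@perm_inj _ (tperm i j))) //.
Qed.

Definition famF n (i j : 'I_n) : {ffun 'I_2 -> {set bool * 'I_n}} :=
  [ffun k : 'I_2 => if val k == 0 then pr i j else pr j i].

Lemma moved_sw n (i j : 'I_n) : i != j ->
  moved (sw i j) = pr i j :|: pr j i.
Proof.
move=> ij; apply/setP => -[b k]; rewrite !inE permE /swf /= xpair_eqE eqxx /=.
have ji : j != i by rewrite eq_sym.
case: tpermP => [->|->|/eqP kj /eqP ki]; case: b;
  rewrite /= !xpair_eqE /= ?eqxx /= ?orbT ?orbF ?(negbTE ij) ?(negbTE ji) ?(negbTE ki) ?(negbTE kj) //.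
Qed.

Lemma gen_sw n (i j : 'I_n) : i != j ->
  generator_fam (crown_le n) chain2_le (sw i j) (famF i j).
Proof.
move=> ij; have ji : j != i by rewrite eq_sym.
have U : \bigcup_k famF i j k = moved (sw i j).
  by rewrite moved_sw // big_ord_recr big_ord1 /= !ffunE.
have S : forall k, famF i j k \subset moved (sw i j).
  by move=> k; rewrite -U; apply: (bigcup_sup k).
have P : forall k, exists a b, a != b /\ famF i j k = pr a b.
  by move=> k; rewrite ffunE; case: ifP => _; [exists i, j | exists j, i].
apply/and5P; split.
- exact: sw_aut.
- by apply/forallP.
- by apply/forallP => k; have [a [b [ab ->]]] := P k; apply: pr_iso.
- by apply/forallP => k; have := S k; have [a [b [ab ->]]] := P k; apply: smo_pr.
apply/and3P; split.
- apply/forallP => k; apply/forallP => l; apply/implyP.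
  case: k l => [[|[|//]] ?] [[|[|//]] ?] //= _; rewrite !ffunE /= /pr imsetU1 imset_set1 !permE /swf /=.
  + by rewrite tpermL tpermR.
  + by rewrite tpermL tpermR setUC.
- apply/forallP => k; have := S k; have [a [b [ab ->]]] := P k => sub.
  by rewrite (height_pr ab sub) (height_pr ab (subxx _)).
- by rewrite U.
Qed.

Lemma sym1_pair n (i j : 'I_n) (b : bool) : i != j ->
  sym1 (crown_le n) chain2_le 2 (b, i) (b, j).
Proof.
move=> ij; have ji : j != i by rewrite eq_sym.
apply/existsP; exists (sw i j); apply/existsP; exists (famF i j); rewrite gen_sw //=.
have ne : pr i j != pr j i.
  apply/negP => /eqP/setP/(_ (false, i)); rewrite /pr !inE /= !xpair_eqE /= eqxx /=.
  by rewrite (negbTE ij).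
case: b.
- apply/existsP; exists ord_max; apply/existsP; exists ord0; rewrite !ffunE /= eq_sym ne.
  rewrite /pr !inE !eqxx ?orbT /=; apply/existsP; exists ord_max => /=.
  by rewrite expg1 permE /swf /= tpermL.
- apply/existsP; exists ord0; apply/existsP; exists ord_max; rewrite !ffunE /= ne.
  rewrite /pr !inE !eqxx ?orbT /=; apply/existsP; exists ord_max => /=.
  by rewrite expg1 permE /swf /= tpermL.
Qed.

Lemma qr_iff n (hn : 2 <= n) a b :
  qr_sym (crown_le n) chain2_le 2 a b = (a.1 == b.1).
Proof.
apply/idP/idP; first by move/(qr_fst hn) ->.
case: a b => [x i] [y j] /= /eqP <-.
case: (eqVneq i j) => [->|ij]; first exact: connect0.
by apply: connect1; apply: sym1_pair.
Qed.

Lemma classesE n (hn : 2 <= n) :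
  qr_classes (crown_le n) chain2_le 2 =
  [set [set x : bool * 'I_n | ~~ x.1]; [set x : bool * 'I_n | x.1]].
Proof.
have cl : forall a : bool * 'I_n, [set b | qr_sym (crown_le n) chain2_le 2 a b] =
   if a.1 then [set x : bool * 'I_n | x.1] else [set x : bool * 'I_n | ~~ x.1].
  by move=> a; apply/setP => x; rewrite inE qr_iff //; case: (a.1); rewrite inE; case: (x.1).
pose i0 : 'I_n := Ordinal (ltnW hn).
apply/setP => E; rewrite !inE; apply/imsetP/orP.
- by case=> a _ ->; rewrite cl; case: (a.1); [right|left].
- by case=> /eqP ->; [exists (false, i0) | exists (true, i0)]; rewrite ?cl.
Qed.

Theorem mainTheorem6 (n : nat) (hn : 2 <= n) :
  retractable (crown_le n) chain2_le 2 chain2_le.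
Proof.
set A := [set x : bool * 'I_n | ~~ x.1]; set B := [set x : bool * 'I_n | x.1].
pose i0 : 'I_n := Ordinal (ltnW hn).
pose i1 : 'I_n := Ordinal hn.
have i01 : i0 != i1 by [].
have AB : A != B.
  by apply/negP => /eqP/setP/(_ (false, i0)); rewrite !inE.
split; rewrite classesE //.
- apply/existsP; exists [ffun E : {set bool * 'I_n} => E == B]; apply/and3P; split.
  + apply/forall_inP => x; rewrite !inE => /orP[]/eqP->; apply/forall_inP => y;
    by rewrite !inE => /orP[]/eqP->; rewrite !ffunE ?eqxx ?(negbTE AB).
  + apply/eqP/setP => c; rewrite inE; apply/imsetP; case: c.
    * by exists B; rewrite ?ffunE ?eqxx // !inE eqxx orbT.
    * by exists A; rewrite ?ffunE ?(negbTE AB) // !inE eqxx.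
  + apply/forall_inP => x; rewrite !inE => /orP[]/eqP->; apply/forall_inP => y;
    rewrite !inE => /orP[]/eqP->; rewrite !ffunE ?eqxx ?(negbTE AB) /chain2_le /quot_le /=.
    * rewrite eq_sym eqb_id; apply/existsP; exists (false, i0); rewrite !inE /=.
      by apply/existsP; exists (false, i0); rewrite !inE /crown_le eqxx.
    * rewrite eq_sym eqb_id; apply/existsP; exists (false, i0); rewrite !inE /=.
      by apply/existsP; exists (true, i1); rewrite !inE /crown_le /= /=.
    * rewrite eq_sym eqbF_neg; apply/existsP => -[e /andP[]]; rewrite !inE => e1 /existsP[f].
      by rewrite !inE /crown_le e1 /= orbF => /andP[f1 /eqP ef]; move: e1; rewrite ef (negbTE f1).
    * rewrite eq_sym eqb_id; apply/existsP; exists (true, i0); rewrite !inE /=.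
      by apply/existsP; exists (true, i0); rewrite !inE /crown_le eqxx.
- apply/negP => /existsP[f /and3P[_ /eqP im _]].
  have h : #|[set: bool * 'I_n]| <= 2.
    by rewrite -im; apply: (leq_trans (leq_imset_card _ _)); rewrite cards2 AB.
  move: h; rewrite cardsT card_prod card_bool card_ord.
  by rewrite -[X in _ <= X]muln1 leq_mul2l /= leqNgt hn.
Qed.
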